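(* Let $k\ge 1$ be a fixed integer and let $n$ be sufficiently large with respect to $k$. Let $G$ be a graph of order $n$ with $|E(G)|\le kn$ and $\Delta(G)<2n/3+o(n)$. Let $T$ be a tree with $|V(T)|\le n$ and $\Delta(T)<60(2k+1)n^{3/4}$. Let $I\subset V(G)$ with $|I|\le k$ such that $d_G(v)\le 2k$ for every $v\in I$. Let $I'\subset V(T)$ with $|I'|=|I|$ such that $d_T(v')\le 2$ for every $v'\in I'$. Suppose there is a packing $h':I'\to I$ of $T[I']$ and $G[I]$. Then there is a packing $f':V(T)\to V(G)$ of $T$ and $G$ such that (1) $\Delta(f'(T)\oplus G)\le 2n/3+o(n)$, and (2) $f'(v')=h'(v')$ for every $v'\in I'$.
   Context: For graphs $H_1,H_2$ with $|V(H_1)|\le |V(H_2)|$, an injection $f:V(H_1)\to V(H_2)$ is a packing of $H_1$ and $H_2$ if $E(f(H_1))\cap E(H_2)=\emptyset$, where $f(H_1)$ is the graph on $V(H_2)$ with edge set $\{f(u)f(v):uv\in E(H_1)\}$. For graphs $G,H$ (vertex sets not necessarily disjoint), $G\oplus H$ is the graph with vertex set $V(G)\cup V(H)$ and edge set $E(G)\cup E(H)$. $T[I']$, $G[I]$ denote induced subgraphs; $\Delta$ is the maximum degree, $d_G(v)$ the degree of $v$ in $G$. The $o(n)$ terms are with respect to $n\to\infty$ for fixed $k$. *)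

(* Defs.v *)
From HB Require Import structures.
From mathcomp Require Import all_boot all_order all_algebra.
Set Implicit Arguments. Unset Strict Implicit. Unset Printing Implicit Defensive.
Import Order.TTheory GRing.Theory Num.Theory.

Definition simple_graph (V : finType) (e : rel V) : Prop :=
  symmetric e /\ irreflexive e.

Definition deg (V : finType) (e : rel V) (x : V) : nat := #|[set y | e x y]|.

(* maximum degree Delta(G) (0 for the empty graph) *)
Definition maxdeg (V : finType) (e : rel V) : nat := \max_(x : V) deg e x.

Definition edges (V : finType) (e : rel V) : {set {set V}} :=
  [set [set p.1; p.2] | p in [set p : V * V | e p.1 p.2]].

Definition connected_graph (V : finType) (e : rel V) : Prop :=
  forall x y : V, connect e x y.

Definition acyclic_graph (V : finType) (e : rel V) : Prop :=
  forall c : seq V, 3 <= size c -> uniq c -> ~~ cycle e c.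

Definition is_tree (V : finType) (e : rel V) : Prop :=
  [/\ simple_graph e, 0 < #|V|, connected_graph e & acyclic_graph e].

Definition packing (V1 V2 : finType) (e1 : rel V1) (e2 : rel V2)
  (f : V1 -> V2) : Prop :=
  injective f /\ (forall u v, e1 u v -> ~~ e2 (f u) (f v)).

Definition image_union (V1 V2 : finType) (e1 : rel V1) (e2 : rel V2)
  (f : V1 -> V2) : rel V2 :=
  fun x y => e2 x y || [exists u, exists v, [&& e1 u v, f u == x & f v == y]].

(* Main.v *)
Require Import Defs.
From HB Require Import structures.
From mathcomp Require Import all_boot all_order all_algebra.
From mathcomp Require Import zify.
Set Implicit Arguments. Unset Strict Implicit. Unset Printing Implicit Defensive.
Import Order.TTheory GRing.Theory Num.Theory.
Lemma card_bigcup_le (I T : finType) (P : pred I) (F : I -> {set T}) :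
  #|\bigcup_(i | P i) F i| <= \sum_(i | P i) #|F i|.
Proof.
apply: (big_ind2 (fun (A : {set T}) (m : nat) => #|A| <= m)).
- by rewrite cards0.
- move=> A a B b HA HB; rewrite cardsU; apply: leq_trans (leq_subr _ _) _.
  exact: leq_add.
- by [].
Qed.

Lemma deg_sum_pairs (V : finType) (e : rel V) :
  \sum_x deg e x = #|[set p : V * V | e p.1 p.2]|.
Proof.
rewrite -sum1dep_card.
rewrite /deg; under eq_bigr => x _ do rewrite -sum1dep_card big_mkcond.
by rewrite pair_big [RHS]big_mkcond.
Qed.

Lemma set2_eq (T : finType) (a b c d : T) : a != b ->
  [set a; b] = [set c; d] -> (a = c /\ b = d) \/ (a = d /\ b = c).
Proof.
move=> nab E.
have ha : a \in [set c; d] by rewrite -E set21.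
have hb : b \in [set c; d] by rewrite -E set22.
move: ha hb; rewrite !in_set2.
case/orP=> /eqP ea; case/orP=> /eqP eb.
- by rewrite ea eb eqxx in nab.
- by left.
- by right.
- by rewrite ea eb eqxx in nab.
Qed.
Lemma path_drop (T : Type) (e : rel T) x p i :
  path e x p -> i <= size p -> path e (nth x (x :: p) i) (drop i p).
Proof.
elim: p x i => [|y p IH] x [|i] //= /andP[exy pp] hi.
rewrite (set_nth_default y) ?ltnS //; exact: IH.
Qed.

Lemma low_vertex (V : finType) (e : rel V) : simple_graph e -> acyclic_graph e ->
  forall A : {set V}, A != set0 -> exists2 v, v \in A & #|[set w in A | e v w]| <= 1.
Proof.
move=> [sym irr] acyc A /set0Pn [a0 a0A].
pose tr (x : V) (p : seq V) := [&& x \in A, all (mem A) p, uniq (x :: p) & path e x p].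
pose P := fun j => [exists x, exists t : j.-tuple V, tr x t].
have exP : exists j, P j.
  exists 0; apply/existsP; exists a0; apply/existsP; exists [tuple].
  by rewrite /tr a0A.
have ubP : forall j, P j -> j <= #|A|.
  move=> j /existsP[x /existsP[t /and4P[xA allA u _]]].
  have H : size (x :: t) <= size (enum A).
    apply: (uniq_leq_size u) => y; rewrite mem_enum inE.
    by case/orP=> [/eqP->//|]; apply: (allP allA).
  by move: H; rewrite /= size_tuple -cardE => /ltnW.
have [j Pj maxj] := ex_maxnP exP ubP.
move: Pj => /existsP[x /existsP[t trt]].
move: trt; rewrite /tr; set p := tval t => /and4P[xA allA u pth].
have sp : size p = j by rewrite size_tuple.
set v := last x p.
have allA' : forall y, y \in x :: p -> y \in A.
  by move=> y; rewrite inE => /orP[/eqP->//|]; apply: (allP allA).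
exists v; first by apply: allA'; exact: mem_last.
have nbr_in : forall w, w \in A -> e v w -> w \in x :: p.
  move=> w wA evw; apply/negPn/negP => wn.
  have : P (size (rcons p w)).
    apply/existsP; exists x; apply/existsP; exists (in_tuple (rcons p w)).
    rewrite /tr /= xA all_rcons; apply/and4P; split=> //; first by rewrite inE wA allA.
      move: wn u; rewrite !inE /= mem_rcons inE rcons_uniq => /norP[wx wp] /andP[xp up].
      by rewrite eq_sym (negbTE wx) xp wp up.
    by rewrite rcons_path pth evw.
  by move/maxj; rewrite size_rcons sp ltnn.
suff sub : [set w in A | e v w] \subset [set nth x (x :: p) j.-1].
  by apply: leq_trans (subset_leq_card sub) _; rewrite cards1.
apply/subsetP => w; rewrite inE => /andP[wA evw]; rewrite inE.
have wm := nbr_in w wA evw.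
set s := x :: p.
set i := index w s.
have iS : i < j.+1 by rewrite -sp -/(size s) index_mem.
have nthi : nth x s i = w by rewrite nth_index.
have vj : nth x s j = v by rewrite /v (last_nth x) sp.
have ij : i != j.
  apply/eqP => E; move: evw; rewrite -nthi E vj irr //.
case: (boolP (i == j.-1)) => [/eqP <-|nij]; first by rewrite nthi.
exfalso.
have i2 : i.+2 <= j by move: iS ij nij; clear; lia.
have c3 : 3 <= size (drop i s) by rewrite size_drop /= sp; move: i2; clear; lia.
have cu : uniq (drop i s) by rewrite drop_uniq.
have cc : cycle e (drop i s).
  rewrite (drop_nth x); last by rewrite /= sp.
  rewrite nthi /= rcons_path.
  have ip : i <= size p by rewrite sp; move: i2; clear; lia.
  have pd := path_drop pth ip.
  have -> : path e w (drop i p) by rewrite -nthi.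
  case E: (drop i p) => [|y r].
    by move: (f_equal size E); rewrite size_drop sp /=; move: i2; clear; lia.
  rewrite /=.
  have : last x p = last y r.
    by rewrite -(cat_take_drop i p) last_cat E.
  by rewrite -/v => <-.
by move: (acyc _ c3 cu); rewrite cc.
Qed.
Lemma pairs_le_edges (V : finType) (e : rel V) : simple_graph e ->
  #|[set p : V * V | e p.1 p.2]| <= 2 * #|edges e|.
Proof.
move=> [sym irr].
pose P1 := [set p : V * V | e p.1 p.2 && (enum_rank p.1 < enum_rank p.2)].
pose P2 := [set p : V * V | e p.1 p.2 && (enum_rank p.2 < enum_rank p.1)].
pose phi := fun p : V * V => [set p.1; p.2].
have sub : [set p : V * V | e p.1 p.2] \subset P1 :|: P2.
  apply/subsetP => p; rewrite !inE => ep; rewrite ep /=.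
  have : p.1 != p.2 by apply/eqP => E; move: ep; rewrite E irr.
  move=> ne; have : enum_rank p.1 != enum_rank p.2.
    by apply: contra ne => /eqP/enum_rank_inj ->.
  by rewrite neq_ltn.
have imE : forall P : {set V * V}, P \subset [set p : V * V | e p.1 p.2] ->
   phi @: P \subset edges e.
  move=> P sP; apply/subsetP => z /imsetP[p pP ->]; rewrite /edges.
  by apply/imsetP; exists p => //; apply: (subsetP sP).
have inj1 : {in P1 &, injective phi}.
  move=> [a b] [c d]; rewrite !inE /phi /= => /andP[eab rab] /andP[ecd rcd] E.
  have nab : a != b by apply/eqP => E'; move: eab; rewrite E' irr.
  case: (set2_eq nab E) => [[-> ->] //|[Ea Eb]].
  by move: rab; rewrite Ea Eb ltnNge ltnW.
have inj2 : {in P2 &, injective phi}.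
  move=> [a b] [c d]; rewrite !inE /phi /= => /andP[eab rab] /andP[ecd rcd] E.
  have nab : a != b by apply/eqP => E'; move: eab; rewrite E' irr.
  case: (set2_eq nab E) => [[-> ->] //|[Ea Eb]].
  by move: rab; rewrite Ea Eb ltnNge ltnW.
have c1 : #|P1| <= #|edges e|.
  rewrite -(card_in_imset inj1); apply: subset_leq_card; apply: imE.
  by apply/subsetP => p; rewrite !inE => /andP[].
have c2 : #|P2| <= #|edges e|.
  rewrite -(card_in_imset inj2); apply: subset_leq_card; apply: imE.
  by apply/subsetP => p; rewrite !inE => /andP[].
apply: leq_trans (subset_leq_card sub) _.
rewrite cardsU; apply: leq_trans (leq_subr _ _) _.
by rewrite mul2n -addnn leq_add.
Qed.
Lemma pairs_in_le (V : finType) (e : rel V) : simple_graph e -> acyclic_graph e ->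
  forall A : {set V},
  #|[set p : V * V | [&& p.1 \in A, p.2 \in A & e p.1 p.2]]| <= 2 * #|A|.
Proof.
move=> sg acyc A.
have [sym irr] := sg.
elim: {A}#|A|.+1 {-2}A (ltnSn #|A|) => // m IH A cA.
case: (boolP (A == set0)) => [/eqP A0|An0].
  rewrite A0 cards0 muln0 leqn0 cards_eq0; apply/eqP/setP => p.
  by rewrite !inE.
have [v vA cN] := low_vertex sg acyc An0.
set N := [set w in A | e v w] in cN.
set A' := A :\ v.
have cA' : #|A'| < m by move: cA; rewrite (cardsD1 v A) vA.
have sub : [set p : V * V | [&& p.1 \in A, p.2 \in A & e p.1 p.2]] \subset
   [set p : V * V | [&& p.1 \in A', p.2 \in A' & e p.1 p.2]] :|:
   ((fun w => (v, w)) @: N :|: (fun w => (w, v)) @: N).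
  apply/subsetP => [[a b]]; rewrite !inE /= => /and3P[aA bA eab].
  case: (eqVneq a v) => [Eav|nav].
    rewrite Eav in eab *; apply/orP; right; apply/orP; left.
    by apply/imsetP; exists b => //; rewrite inE bA eab.
  case: (eqVneq b v) => [Ebv|nbv].
    rewrite Ebv in eab *; apply/orP; right; apply/orP; right.
    by apply/imsetP; exists a => //; rewrite inE aA sym eab.
  by rewrite aA bA eab.
apply: leq_trans (subset_leq_card sub) _.
rewrite cardsU; apply: leq_trans (leq_subr _ _) _.
rewrite cardsU; apply: (@leq_trans (2 * #|A'| + (#|N| + #|N|))).
  apply: leq_add; first exact: IH.
  apply: leq_trans (leq_subr _ _) _; apply: leq_add; exact: leq_imset_card.
rewrite (cardsD1 v A) vA /= -/A'; move: cN; clear; lia.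
Qed.

Lemma tree_deg_sum (V : finType) (e : rel V) : simple_graph e -> acyclic_graph e ->
  \sum_x deg e x <= 2 * #|V|.
Proof.
move=> sg acyc; rewrite deg_sum_pairs.
have := pairs_in_le sg acyc [set: V]; rewrite cardsT.
apply: leq_trans; apply: subset_leq_card; apply/subsetP => p; rewrite !inE //.
Qed.
Lemma inj_into (T1 T2 : finType) (y0 : T2) (R : {set T1}) (Y : {set T2}) :
  #|R| <= #|Y| ->
  exists phi : T1 -> T2, {in R &, injective phi} /\ forall t, t \in R -> phi t \in Y.
Proof.
move=> cRY.
exists (fun t => nth y0 (enum Y) (index t (enum R))); split.
  move=> t1 t2 t1R t2R /= E.
  have i1 : index t1 (enum R) < size (enum Y).
    by rewrite -cardE; apply: (leq_trans _ cRY); rewrite cardE index_mem mem_enum.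
  have i2 : index t2 (enum R) < size (enum Y).
    by rewrite -cardE; apply: (leq_trans _ cRY); rewrite cardE index_mem mem_enum.
  move/eqP: E; rewrite nth_uniq ?enum_uniq // => /eqP E.
  have e1 : nth t1 (enum R) (index t1 (enum R)) = t1 by rewrite nth_index ?mem_enum.
  have e2 : nth t1 (enum R) (index t2 (enum R)) = t2 by rewrite nth_index ?mem_enum.
  by rewrite -e1 E e2.
move=> t tR; rewrite -mem_enum; apply: mem_nth.
by rewrite -cardE; apply: (leq_trans _ cRY); rewrite cardE index_mem mem_enum.
Qed.

Definition conf (VG VT : finType) (eG : rel VG) (eT : rel VT) (f : VT -> VG) :=
  #|[set p : VT * VT | eT p.1 p.2 && eG (f p.1) (f p.2)]|.
Lemma sum_sub_pred (I : finType) (P Q : pred I) (F : I -> nat) :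
  \sum_(i | P i && Q i) F i <= \sum_(i | P i) F i.
Proof. rewrite big_mkcondr /=; apply: leq_sum => i _; by case: (Q i). Qed.

Lemma sum_const_card (I : finType) (P : pred I) (c : nat) :
  \sum_(i | P i) c = #|[set i | P i]| * c.
Proof. by rewrite -sum1dep_card big_distrl /=; apply: eq_bigr => *; rewrite mul1n. Qed.

Lemma swap_step (VG VT : finType) (eG : rel VG) (eT : rel VT) (Bd : {set VG})
  (I' S : {set VT}) (f : VT -> VG) (u v : VT) (s0 D W0 : nat) :
  symmetric eG -> irreflexive eG -> symmetric eT -> irreflexive eT ->
  (forall x, x \notin Bd -> deg eG x <= s0) ->
  (forall t, deg eT t <= D) ->
  injective f ->
  (forall t, t \notin S -> f t \notin Bd) ->
  (forall t, t \in S -> f t \in Bd) ->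
  (forall a, \sum_(t in S | eT a t) deg eG (f t) <= W0) ->
  u \notin S -> eT u v -> eG (f u) (f v) ->
  #|Bd| + #|I'| + 1 + W0 + s0 * D + s0 + s0 * D < #|VG| ->
  exists f' : VT -> VG, [/\ injective f', (forall t, t \in I' -> u != t -> f' t = f t),
    (forall t, t \in S -> f' t = f t), (forall t, t \notin S -> f' t \notin Bd)
    & conf eG eT f' < conf eG eT f].
Proof.
move=> symG irrG symT irrT hs0 hD injf nSB SB hW uS euv eGuv hcount.
set x := f u.
have xB : x \notin Bd by apply: nSB.
set E4 := \bigcup_(u' | eT u u') [set y | eG (f u') y].
set E6 := \bigcup_(w' | eG x (f w')) f @: [set w | eT w' w].
set Bad := Bd :|: f @: I' :|: [set x] :|: E4 :|: [set y | eG x y] :|: E6.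
have c4 : #|E4| <= W0 + s0 * D.
  apply: leq_trans (card_bigcup_le _ _) _.
  rewrite (bigID (fun t => t \in S)) /=; apply: leq_add.
    apply: (leq_trans _ (hW u)).
    rewrite [X in _ <= X](eq_bigl (fun t => eT u t && (t \in S))) //.
    by move=> t; rewrite andbC.
  apply: (@leq_trans (\sum_(i | eT u i && (i \notin S)) s0)).
    by apply: leq_sum => t /andP[_ tS]; apply: hs0; apply: nSB.
  apply: leq_trans (sum_sub_pred _ _ _) _.
  rewrite sum_const_card mulnC leq_mul2l; apply/orP; right.
  exact: hD.
have c6 : #|E6| <= s0 * D.
  apply: leq_trans (card_bigcup_le _ _) _.
  apply: (@leq_trans (\sum_(w' | eG x (f w')) D)).
    apply: leq_sum => w' _; apply: leq_trans (leq_imset_card _ _) _; exact: hD.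
  rewrite sum_const_card leq_mul2r; apply/orP; right.
  apply: leq_trans (hs0 x xB); rewrite /deg.
  rewrite -(card_in_imset (f := f) (D := [set w | eG x (f w)])); last by move=> ? ? _ _; apply: injf.
  by apply: subset_leq_card; apply/subsetP => z /imsetP[w]; rewrite !inE => h ->.
have cBad : #|Bad| < #|VG|.
  apply: leq_ltn_trans hcount.
  rewrite /Bad !cardsU cards1.
  have := leq_imset_card f I'; have := hs0 x xB; rewrite /deg.
  move: c4 c6; clear; lia.
have [y yBad] : exists y, y \notin Bad.
  apply/existsP; rewrite -negb_forall; apply/negP => /forallP H.
  have : [set: VG] \subset Bad by apply/subsetP => z _; apply: H.
  by move/subset_leq_card; rewrite cardsT leqNgt cBad.
move: yBad; rewrite /Bad !inE !negb_or => /andP[/andP[/andP[/andP[/andP[yBd yI] yx] yE4] nxy] yE6].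
have ha : forall u', eT u u' -> ~~ eG (f u') y.
  move=> u' eu; apply: contra yE4 => h; apply/bigcupP; exists u' => //; by rewrite inE.
have hb : forall w' w, eG x (f w') -> eT w' w -> f w != y.
  move=> w' w h1 h2; apply/eqP => E; move: yE6; apply/negP/negPn.
  by apply/bigcupP; exists w' => //; apply/imsetP; exists w; rewrite ?inE.
pose f' := fun t => if t == u then y else if f t == y then x else f t.
have f'neq_y : forall t, t != u -> f' t != y.
  move=> t tu; rewrite /f' (negbTE tu); case: (eqVneq (f t) y) => [_|//].
  by rewrite eq_sym.
exists f'; split.
- move=> t1 t2; case: (eqVneq t1 u) => [->|t1u]; case: (eqVneq t2 u) => [->|t2u] //.
  + move=> E; move: (f'neq_y t2 t2u); rewrite -E /f' eqxx eqxx //.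
  + move=> E; move: (f'neq_y t1 t1u); rewrite E /f' eqxx eqxx //.
  rewrite /f' (negbTE t1u) (negbTE t2u).
  case: (eqVneq (f t1) y) => [E1|n1]; case: (eqVneq (f t2) y) => [E2|n2].
  + by move=> _; apply: injf; rewrite E1 E2.
  + by move=> E; move: t2u; rewrite -(injf _ _ E) eqxx.
  + by move=> E; move: t1u; rewrite (injf _ _ E) eqxx.
  + exact: injf.
- move=> t tI ut; rewrite /f' eq_sym (negbTE ut).
  case: (eqVneq (f t) y) => [E|//]; move: yI; rewrite -E.
  by rewrite imset_f.
- move=> t tS; rewrite /f'.
  have tu : t != u by apply: contra uS => /eqP <-.
  rewrite (negbTE tu); case: (eqVneq (f t) y) => [E|//]; move: yBd; rewrite -E.
  by rewrite SB.
- move=> t tS; rewrite /f'; case: (t == u) => //.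
  by case: (f t == y) => //; apply: nSB.
- rewrite /conf.
  set C := [set p : VT * VT | eT p.1 p.2 && eG (f p.1) (f p.2)].
  have uvC : (u, v) \in C by rewrite inE euv eGuv.
  have sub : [set p : VT * VT | eT p.1 p.2 && eG (f' p.1) (f' p.2)] \subset C :\ (u, v).
    apply/subsetP => [[a b]]; rewrite !inE /= => /andP[eab].
    have ab : a != b by apply: contraTneq eab => ->; rewrite irrT.
    rewrite /f'.
    case: (eqVneq a u) => [Ea|au].
      subst a; have bu : b != u by rewrite eq_sym.
      rewrite (negbTE bu); case: (eqVneq (f b) y) => [Eb|nb].
        by rewrite symG (negbTE nxy).
      by rewrite symG (negbTE (ha b eab)).
    rewrite xpair_eqE (negbTE au) /=.
    case: (eqVneq (f a) y) => [Eay|nay].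
      case: (eqVneq b u) => [Ebu|bu].
        by rewrite (negbTE nxy).
      have nby : f b != y by apply: contraNneq ab => E; apply/eqP; apply: injf; rewrite Eay E.
      rewrite (negbTE nby) => h; move: (hb b a h).
      by rewrite symT eab Eay eqxx; move/(_ isT).
    case: (eqVneq b u) => [Ebu|bu].
      subst b => h; move: (ha a); rewrite symT eab => /(_ isT).
      by rewrite h.
    case: (eqVneq (f b) y) => [Eby|nby].
      rewrite symG => h; move: (hb a b h eab); rewrite Eby eqxx //.
    by rewrite eab.
  apply: leq_ltn_trans (subset_leq_card sub) _.
  by rewrite (cardsD1 (u, v) C) uvC.
Qed.
Lemma fix_all (VG VT : finType) (eG : rel VG) (eT : rel VT) (Bd : {set VG})
  (I' S : {set VT}) (h' g : VT -> VG) (s0 D W0 : nat) :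
  symmetric eG -> irreflexive eG -> symmetric eT -> irreflexive eT ->
  (forall x, x \notin Bd -> deg eG x <= s0) ->
  (forall t, deg eT t <= D) ->
  (forall t, t \in S -> g t \in Bd) ->
  (forall a, \sum_(t in S | eT a t) deg eG (g t) <= W0) ->
  (forall a b, a \in I' -> b \in I' -> eT a b -> ~~ eG (h' a) (h' b)) ->
  (forall s a, s \in S -> a \in I' -> ~~ eT s a) ->
  (forall s1 s2, s1 \in S -> s2 \in S -> ~~ eT s1 s2) ->
  #|Bd| + #|I'| + 1 + W0 + s0 * D + s0 + s0 * D < #|VG| ->
  forall c (f : VT -> VG), conf eG eT f <= c ->
  injective f -> (forall t, t \in I' -> f t = h' t) -> (forall t, t \in S -> f t = g t) ->
  (forall t, t \notin S -> f t \notin Bd) ->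
  exists f' : VT -> VG, [/\ injective f', (forall t, t \in I' -> f' t = h' t)
     & forall a b, eT a b -> ~~ eG (f' a) (f' b)].
Proof.
move=> symG irrG symT irrT hs0 hD gB hW hI hSI hSS hcount.
elim=> [|c IH] f cf injf fI fS fnS.
  exists f; split=> // a b eab; apply/negP => eGab.
  move: cf; rewrite leqn0 cards_eq0 => /eqP C0.
  have : (a, b) \in set0 by rewrite -C0 inE eab eGab.
  by rewrite inE.
case: (boolP [exists p : VT * VT, eT p.1 p.2 && eG (f p.1) (f p.2)]); last first.
  move=> /existsPn H; exists f; split=> // a b eab; apply/negP => eGab.
  by move: (H (a, b)); rewrite /= eab eGab.
move=> /existsP[[a b] /= /andP[eab eGab]].
have fSB : forall t, t \in S -> f t \in Bd by move=> t tS; rewrite fS ?gB.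
have hW' : forall a, \sum_(t in S | eT a t) deg eG (f t) <= W0.
  move=> a0; apply: leq_trans (hW a0); rewrite leq_eqVlt; apply/orP; left; apply/eqP.
  by apply: eq_bigr => t /andP[tS _]; rewrite fS.
have [u [v [uS uI euv eGuv]]] : exists u v, [/\ u \notin S, u \notin I', eT u v & eG (f u) (f v)].
  case: (boolP ((a \notin S) && (a \notin I'))) => [/andP[aS aI]|ha].
    by exists a, b.
  case: (boolP ((b \notin S) && (b \notin I'))) => [/andP[bS bI]|hb].
    by exists b, a; rewrite symT symG.
  exfalso; move: ha hb; rewrite !negb_and !negbK.
  case/orP => ha; case/orP => hb.
  - by move: (hSS a b ha hb); rewrite eab.
  - by move: (hSI a b ha hb); rewrite eab.
  - by move: (hSI b a hb ha); rewrite symT eab.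
  - by move: (hI a b ha hb eab); rewrite -fI // -fI // eGab.
have [f' [injf' f'I f'S f'nS lt]] := swap_step symG irrG symT irrT hs0 hD injf fnS fSB hW' uS euv eGuv hcount.
apply: (IH f') => //.
- by rewrite -ltnS; apply: leq_trans lt cf.
- move=> t tI; rewrite f'I ?fI //; by apply: contraNneq uI => ->.
- by move=> t tS; rewrite f'S ?fS.
Qed.
Lemma Wsum (VG VT : finType) (eG : rel VG) (eT : rel VT) (S : {set VT}) (g : VT -> VG) :
  symmetric eT -> (forall t, t \in S -> deg eT t <= 2) -> {in S &, injective g} ->
  \sum_a \sum_(t in S | eT a t) deg eG (g t) <= 2 * \sum_x deg eG x.
Proof.
move=> symT dS injg.
rewrite (exchange_big_dep (fun t => t \in S)) /=; last by move=> a t _ /andP[].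
apply: (@leq_trans (\sum_(t in S) 2 * deg eG (g t))).
  apply: leq_sum => t tS.
  rewrite (eq_bigl (fun a => eT t a)); last by move=> a; rewrite tS symT.
  rewrite sum_const_card leq_mul2r; apply/orP; right; exact: dS.
rewrite -big_distrr /= leq_mul2l; apply/orP; right.
rewrite -(big_imset (fun x => deg eG x) injg) /=.
rewrite [X in _ <= X](bigID (fun x => x \in g @: S)) /=.
by apply: leq_addr.
Qed.
Lemma exists_of_card (T : finType) (A B : {set T}) :
  #|A| < #|B| -> exists x, (x \in B) && (x \notin A).
Proof.
move=> c; case: (boolP [exists x, (x \in B) && (x \notin A)]) => [/existsP //|/existsPn H].
have : B \subset A.
  by apply/subsetP => z zB; move: (H z); rewrite zB /= negbK.
by move/subset_leq_card; rewrite leqNgt c.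
Qed.

Definition nbhd (V : finType) (e : rel V) (X : {set V}) : {set V} :=
  \bigcup_(a in X) [set t | e a t].

Lemma card_nbhd (V : finType) (e : rel V) (X : {set V}) (d : nat) :
  (forall a, a \in X -> deg e a <= d) -> #|nbhd e X| <= d * #|X|.
Proof.
move=> hd; apply: leq_trans (card_bigcup_le _ _) _.
apply: (@leq_trans (\sum_(a in X) d)); first by apply: leq_sum => a aX; apply: hd.
by rewrite sum_nat_const mulnC.
Qed.

Lemma in_nbhd (V : finType) (e : rel V) (X : {set V}) a t :
  a \in X -> e a t -> t \in nbhd e X.
Proof. by move=> aX eat; apply/bigcupP; exists a => //; rewrite inE. Qed.

Lemma greedy (VG VT : finType) (x0 : VG) (eG : rel VG) (eT : rel VT) (Bd : {set VG})
  (I' : {set VT}) (n k D : nat) :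
  symmetric eT -> irreflexive eT -> 0 < n ->
  (forall t, deg eT t <= D) ->
  (forall x, x \in Bd -> 10 * deg eG x < 7 * n) ->
  \sum_x deg eG x <= 2 * (k * n) ->
  (forall t, t \in I' -> deg eT t <= 2) -> #|I'| <= k ->
  forall j, j <= #|Bd| -> 3 * j + 3 * k + 20 * k * D <= #|[set t | deg eT t <= 2]| ->
  exists S : {set VT}, exists g : VT -> VG,
    [/\ #|S| = j, {in S &, injective g}, (forall t, t \in S -> g t \in Bd),
     (forall t, t \in S -> deg eT t <= 2) &
     [/\ (forall s a, s \in S -> a \in I' -> ~~ eT s a),
     (forall t, t \in S -> t \notin I'),
     (forall s1 s2, s1 \in S -> s2 \in S -> ~~ eT s1 s2) &
     (forall a, 10 * \sum_(t in S | eT a t) deg eG (g t) <= 9 * n)]].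
Proof.
move=> symT irrT n0 hD hBd hsum hI' cI'.
elim=> [|j IH] hj hL.
  exists set0, (fun _ => x0); (split; last split); rewrite ?cards0 //.
  - by move=> ? ? ; rewrite inE.
  - by move=> t; rewrite inE.
  - by move=> t; rewrite inE.
  - by move=> s a; rewrite inE.
  - by move=> t; rewrite inE.
  - by move=> s; rewrite inE.
  - by move=> a; rewrite big_pred0 // => t; rewrite inE.
have hL' : 3 * j + 3 * k + 20 * k * D <= #|[set t | deg eT t <= 2]|.
  by move: hL; clear; lia.
have [S [g [cS injg gB dS [SI' SnI Sind SW]]]] := IH (ltnW hj) hL'.
have [x /andP[xB xS]] : exists x, (x \in Bd) && (x \notin g @: S).
  by apply: exists_of_card; rewrite card_in_imset // cS.
pose W a := \sum_(t in S | eT a t) deg eG (g t).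
pose H := [set a | n < 5 * W a].
have cH : #|H| <= 20 * k.
  have s1 : \sum_a W a <= 2 * (2 * (k * n)).
    apply: leq_trans (Wsum eG symT dS injg) _; by rewrite leq_mul2l hsum orbT.
  have s2 : #|H| * n.+1 <= 5 * \sum_a W a.
    rewrite -sum_nat_const big_distrr /=.
    apply: (@leq_trans (\sum_(a in H) 5 * W a)).
      by apply: leq_sum => a; rewrite inE.
    by rewrite [X in _ <= X](bigID (fun a => a \in H)) /= leq_addr.
  have : #|H| * n.+1 <= 20 * k * n by move: s1 s2; clear; lia.
  move: n0; clear; nia.
set Ex := S :|: nbhd eT S :|: I' :|: nbhd eT I' :|: nbhd eT H.
have cEx : #|Ex| < #|[set t | deg eT t <= 2]|.
  apply: leq_trans hL.
  have c1 := card_nbhd dS; have c2 := card_nbhd hI'.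
  have c3 : #|nbhd eT H| <= D * #|H| by apply: card_nbhd => a _.
  rewrite /Ex !cardsU.
  have : D * #|H| <= D * (20 * k) by rewrite leq_mul2l cH orbT.
  move: c1 c2 c3 cS cI'; clear; nia.
have [s /andP[sL sEx]] : exists s, (s \in [set t | deg eT t <= 2]) && (s \notin Ex).
  exact: exists_of_card.
move: sEx; rewrite /Ex !inE !negb_or => /andP[/andP[/andP[/andP[sS sNS] sI] sNI] sNH].
have nS : forall t, t \in S -> eT s t = false.
  by move=> t tS; apply/negP => h; move: sNS; rewrite (in_nbhd tS) // symT.
have nI : forall t, t \in I' -> eT s t = false.
  by move=> t tI; apply/negP => h; move: sNI; rewrite (in_nbhd tI) // symT.
exists (s |: S), (fun t => if t == s then x else g t); split; last split.
- by rewrite cardsU1 sS cS.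
- move=> t1 t2; rewrite !inE.
  case: (eqVneq t1 s) => [->|t1s]; case: (eqVneq t2 s) => [->|t2s] //= h1 h2.
  + by move=> E; move: xS; rewrite E imset_f.
  + by move=> E; move: xS; rewrite -E imset_f.
  + exact: injg.
- move=> t; rewrite !inE; case: (eqVneq t s) => [_ _|ts /= tS]; [exact: xB | exact: gB].
- by move=> t; rewrite !inE => /orP[/eqP->|]; [rewrite inE in sL|apply: dS].
- move=> t a; rewrite !inE => /orP[/eqP->|tS] aI; first by rewrite nI.
  exact: SI'.
- by move=> t; rewrite !inE => /orP[/eqP->|]; [|apply: SnI].
- move=> s1 s2; rewrite !inE => /orP[/eqP->|s1S] /orP[/eqP->|s2S].
  + by rewrite irrT.
  + by rewrite nS.
  + by rewrite symT nS.
  + exact: Sind.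
- move=> a.
  rewrite big_mkcondr /= big_setU1 //= eqxx.
  have -> : \sum_(i in S) (if eT a i then deg eG (if i == s then x else g i) else 0) = W a.
    rewrite /W big_mkcondr /=; apply: eq_bigr => t tS.
    by have -> : (t == s) = false by apply/negP => /eqP E; move: sS; rewrite -E tS.
  case: (boolP (eT a s)) => eas.
    have aH : a \notin H.
      apply/negP => aH; move: sNH; rewrite (in_nbhd aH eas) //.
    move: aH; rewrite inE -leqNgt => aH.
    have := hBd x xB; move: aH; clear; lia.
  by rewrite add0n SW.
Qed.
Lemma deg_le_max (V : finType) (e : rel V) x : deg e x <= maxdeg e.
Proof. rewrite /maxdeg; exact: (@leq_bigmax _ (fun x => deg e x) x). Qed.

Lemma maxdeg_union (V1 V2 : finType) (e1 : rel V1) (e2 : rel V2) (f : V1 -> V2) :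
  injective f -> maxdeg (image_union e1 e2 f) <= maxdeg e2 + maxdeg e1.
Proof.
move=> injf; apply/bigmax_leqP => x _.
rewrite /deg /image_union.
case: (pickP (fun u => f u == x)) => [u0 /eqP fu0|none].
  have sub : [set y | e2 x y || [exists u, exists v, [&& e1 u v, f u == x & f v == y]]]
     \subset [set y | e2 x y] :|: f @: [set v | e1 u0 v].
    apply/subsetP => y; rewrite !inE => /orP[->//|/existsP[u /existsP[v /and3P[euv /eqP fux /eqP fvy]]]].
    apply/orP; right; apply/imsetP; exists v => //.
    by rewrite inE; have -> : u0 = u by apply: injf; rewrite fu0 fux.
  apply: leq_trans (subset_leq_card sub) _.
  rewrite cardsU; apply: leq_trans (leq_subr _ _) _; apply: leq_add.
    exact: (deg_le_max e2 x).
  apply: leq_trans (leq_imset_card _ _) _.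
  exact: (deg_le_max e1 u0).
have sub : [set y | e2 x y || [exists u, exists v, [&& e1 u v, f u == x & f v == y]]]
     \subset [set y | e2 x y].
  apply/subsetP => y; rewrite !inE => /orP[->//|/existsP[u /existsP[v /and3P[_ fux _]]]].
  by move: (none u); rewrite fux.
apply: leq_trans (subset_leq_card sub) _; apply: leq_trans (leq_addr _ _).
exact: (deg_le_max e2 x).
Qed.
From mathcomp Require Import lra.
Open Scope ring_scope.
Lemma rat_delta (eps : rat) : 0 < eps ->
  let d := Order.min (eps / 2) (1 / 30) in [/\ 0 < d, d <= eps / 2 & d <= 1 / 30].
Proof.
move=> he d; split.
- by rewrite /d lt_min; apply/andP; split; lra.
- by rewrite /d ge_min lexx.
- by rewrite /d ge_min lexx orbT.
Qed.

Lemma rat_bound (eps : rat) : 0 < eps -> exists Qe : nat, 2 < Qe%:R * eps.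
Proof.
move=> he; exists (Num.bound (2 / eps)).
have h := archi_boundP (ltW (divr_gt0 (ltr0Sn _ 1) he) : 0 <= 2 / eps).
have : 2 / eps * eps < (Num.bound (2 / eps))%:R * eps by rewrite ltr_pM2r.
by rewrite mulfVK ?gt_eqF.
Qed.

Lemma rat_deg (eps delta : rat) (MG MU D n Qe Q : nat) :
  0 < eps -> delta <= eps / 2 -> 2 < Qe%:R * eps -> (Qe <= Q)%N -> (Q * D <= n)%N ->
  (MU <= MG + D)%N -> MG%:R < (2%:R / 3%:R + delta) * n%:R ->
  MU%:R <= (2%:R / 3%:R + eps) * n%:R.
Proof.
move=> he hd hQe hQ hQD hMU hMG.
have nn : (0 : rat) <= n%:R by [].
have h1 : (D%:R : rat) * 2 <= eps * n%:R.
  have a : (D%:R : rat) * 2 <= D%:R * (Qe%:R * eps) by rewrite ler_wpM2l // ltW.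
  apply: le_trans a _.
  have b : (D * Qe <= n)%N by apply: leq_trans hQD; rewrite mulnC leq_mul2r hQ orbT.
  have : ((D * Qe)%:R : rat) <= n%:R by rewrite ler_nat.
  rewrite natrM => b'.
  rewrite mulrA [X in _ <= X]mulrC; apply: ler_wpM2r => //; exact: ltW.
have h2 : delta * n%:R <= eps / 2 * n%:R by apply: ler_wpM2r.
have h3 : (MU%:R : rat) <= MG%:R + D%:R by rewrite -natrD ler_nat.
lra.
Qed.

Lemma rat_G (delta : rat) (MG n : nat) : delta <= 1/30 ->
  MG%:R < (2%:R / 3%:R + delta) * n%:R -> (10 * MG < 7 * n)%N.
Proof.
move=> hd h.
have nn : (0 : rat) <= n%:R by [].
have h2 : delta * n%:R <= 1/30 * n%:R by apply: ler_wpM2r.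
have : ((10 * MG)%:R : rat) < (7 * n)%:R by rewrite !natrM; lra.
by rewrite ltr_nat.
Qed.
Close Scope ring_scope.
Theorem lemma2 :
  forall k : nat, 1 <= k ->
  forall eps : rat, (0 < eps)%R ->
  exists2 delta : rat, (0 < delta)%R &
  exists N : nat, forall n : nat, N <= n ->
  forall (VG VT : finType) (eG : rel VG) (eT : rel VT),
    simple_graph eG -> #|VG| = n ->
    #|edges eG| <= k * n ->
    ((maxdeg eG)%:R < (2%:R / 3%:R + delta) * n%:R :> rat)%R ->
    is_tree eT -> #|VT| <= n ->
    (maxdeg eT) ^ 4 < (60 * (2 * k + 1)) ^ 4 * n ^ 3 ->
  forall (I : {set VG}) (I' : {set VT}),
    #|I| <= k -> (forall v, v \in I -> deg eG v <= 2 * k) ->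
    #|I'| = #|I| -> (forall v', v' \in I' -> deg eT v' <= 2) ->
  forall h' : VT -> VG,
    (forall v', v' \in I' -> h' v' \in I) ->
    {in I' &, injective h'} ->
    (forall u' v', u' \in I' -> v' \in I' -> eT u' v' -> ~~ eG (h' u') (h' v')) ->
  exists f' : VT -> VG,
    [/\ packing eT eG f',
        ((maxdeg (image_union eT eG f'))%:R <= (2%:R / 3%:R + eps) * n%:R :> rat)%R
      & forall v', v' \in I' -> f' v' = h' v'].
Proof.
move=> k hk eps heps.
have [dpos dle dle30] := rat_delta heps.
exists (Order.min (eps / 2) (1 / 30))%R; first exact: dpos.
have [Qe hQe] := rat_bound heps.
pose s0 := 200 * k.
pose Q := 50 * s0 + 200 * k + Qe.
pose C4 := (60 * (2 * k + 1)) ^ 4.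
exists (C4 * Q ^ 4 + 100 * (k + 1 + s0) + 1).
move=> n hn VG VT eG eT sgG cG cE hMG tr cT hDT I I' cI hIdeg cI' hI'deg h' h'I h'inj h'pack.
have hn' : 100 * (k + 1 + 200 * k) < n.
  by apply: leq_trans hn; rewrite -addn1 leq_add2r leq_addl.
have n0 : 0 < n by move: hn'; clear; lia.
set D := maxdeg eT in hDT *.
have QD : Q * D <= n.
  rewrite leqNgt; apply/negP => h.
  have h4 : n ^ 4 < (Q * D) ^ 4 by rewrite ltn_exp2r.
  rewrite expnMn in h4.
  have a : Q ^ 4 * D ^ 4 <= Q ^ 4 * (C4 * n ^ 3) by rewrite leq_mul2l (ltnW hDT) orbT.
  have b : Q ^ 4 * (C4 * n ^ 3) <= n * n ^ 3.
    rewrite mulnA; apply: leq_mul => //; rewrite mulnC; move: hn; clear; lia.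
  by move: (leq_trans h4 (leq_trans a b)); rewrite -expnS ltnn.
have hdG := rat_G dle30 hMG.
have [symG irrG] := sgG.
have [sgT _ _ acT] := tr.
have [symT irrT] := sgT.
have sumG : \sum_x deg eG x <= 2 * (k * n).
  rewrite deg_sum_pairs; apply: leq_trans (pairs_le_edges sgG) _.
  by rewrite leq_mul2l cE orbT.
pose Bd := [set x | s0 < deg eG x].
have cBd : 100 * #|Bd| <= n.
  have h : #|Bd| * s0.+1 <= \sum_x deg eG x.
    rewrite -sum_nat_const; apply: (@leq_trans (\sum_(x in Bd) deg eG x)).
      by apply: leq_sum => x; rewrite inE.
    by rewrite [X in _ <= X](bigID (fun x => x \in Bd)) /= leq_addr.
  move: (leq_trans h sumG); rewrite /s0 => h2.
  have : k * (200 * #|Bd|) <= k * (2 * n) by move: h2; clear; nia.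
  by rewrite leq_mul2l gtn_eqF //=; move=> h3; move: h3; clear; lia.
have sumT := tree_deg_sum sgT acT.
pose L := [set t | deg eT t <= 2].
have cL : #|VT| <= 3 * #|L|.
  have h : #|~: L| * 3 <= \sum_t deg eT t.
    rewrite -sum_nat_const; apply: (@leq_trans (\sum_(t in ~: L) deg eT t)).
      by apply: leq_sum => t; rewrite !inE -ltnNge.
    by rewrite [X in _ <= X](bigID (fun t => t \in ~: L)) /= leq_addr.
  have := cardsC L; move: h sumT; clear; lia.
have hD : forall t, deg eT t <= D by move=> t; exact: deg_le_max.
have [x0 _] : exists x0 : VG, x0 \in VG by apply/card_gt0P; rewrite cG.
have kD : 200 * (k * D) <= n.
  apply: leq_trans QD; rewrite mulnA leq_mul2r; apply/orP; right; rewrite /Q; clear; lia.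
have sD : 50 * (s0 * D) <= n.
  apply: leq_trans QD; rewrite mulnA leq_mul2r; apply/orP; right; rewrite /Q; clear; lia.
have cI'k : #|I'| <= k by rewrite cI'.
pose b' := #|VT| + #|Bd| - n.
have [S [g [cS injg gB dS [SI' SnI Sind SW]]]] : exists S : {set VT}, exists g : VT -> VG,
    [/\ #|S| = b', {in S &, injective g}, (forall t, t \in S -> g t \in Bd),
     (forall t, t \in S -> deg eT t <= 2) &
     [/\ (forall s a, s \in S -> a \in I' -> ~~ eT s a),
     (forall t, t \in S -> t \notin I'),
     (forall s1 s2, s1 \in S -> s2 \in S -> ~~ eT s1 s2) &
     (forall a, 10 * \sum_(t in S | eT a t) deg eG (g t) <= 9 * n)]].
  case: (posnP b') => [b0|bpos].
    exists set0, (fun _ => x0); (split; last split); rewrite ?cards0 //.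
    - by move=> ? ? ; rewrite inE.
    - by move=> t; rewrite inE.
    - by move=> t; rewrite inE.
    - by move=> s a; rewrite inE.
    - by move=> t; rewrite inE.
    - by move=> s; rewrite inE.
    - by move=> a; rewrite big_pred0 // => t; rewrite inE.
  apply: (greedy x0 (n := n) (k := k) (D := D)) => //.
  - move=> x _; apply: leq_ltn_trans hdG; rewrite leq_mul2l; apply/orP; right.
    exact: deg_le_max.
  - by move: cT; rewrite /b'; clear; lia.
  - move: bpos cT cBd cL kD hn'; rewrite /b' /L; clear; lia.
pose W0 := (9 * n) %/ 10.
have hW : forall a, \sum_(t in S | eT a t) deg eG (g t) <= W0.
  by move=> a; rewrite leq_divRL // mulnC; apply: SW.
have hs0 : forall x, x \notin Bd -> deg eG x <= s0 by move=> x; rewrite inE -leqNgt.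
have Igood : forall x, x \in I -> x \notin Bd.
  move=> x xI; rewrite inE -leqNgt; apply: leq_trans (hIdeg x xI) _.
  by rewrite /s0 leq_mul2r orbT.
pose R := ~: (I' :|: S).
pose Y := ~: Bd :\: h' @: I'.
have cRY : #|R| <= #|Y|.
  have dIS : #|I' :&: S| = 0.
    apply/eqP; rewrite cards_eq0; apply/eqP/setP => t; rewrite !inE.
    by apply/negP => /andP[tI tS]; move: (SnI t tS); rewrite tI.
  have eR : #|R| + #|I' :|: S| = #|VT| by rewrite addnC cardsC.
  have eY : #|Y| = #|~: Bd| - #|I'|.
    rewrite /Y cardsD; congr (_ - _).
    have -> : ~: Bd :&: h' @: I' = h' @: I'.
      apply/setIidPr/subsetP => z /imsetP[t tI ->]; rewrite inE; apply: Igood.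
      exact: h'I.
    by rewrite card_in_imset.
  have eB := cardsC Bd.
  move: eR eY eB cT; rewrite cardsU dIS cS cG /b' => eR eY eB cT'.
  move: eR eY eB cT'; clear; lia.
have [phi [injphi phiY]] := inj_into x0 cRY.
pose f0 t := if t \in I' then h' t else if t \in S then g t else phi t.
have phiR : forall t, t \notin I' -> t \notin S -> phi t \in Y.
  by move=> t tI tS; apply: phiY; rewrite !inE negb_or tI tS.
have injf0 : injective f0.
  move=> t1 t2; rewrite /f0.
  case: (boolP (t1 \in I')) => t1I; case: (boolP (t2 \in I')) => t2I.
  - exact: h'inj.
  - case: (boolP (t2 \in S)) => t2S E.
      by move: (Igood _ (h'I _ t1I)); rewrite E gB.
    by move: (phiR _ t2I t2S); rewrite -E in_setD imset_f.
  - case: (boolP (t1 \in S)) => t1S E.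
      by move: (Igood _ (h'I _ t2I)); rewrite -E gB.
    by move: (phiR _ t1I t1S); rewrite E in_setD imset_f.
  case: (boolP (t1 \in S)) => t1S; case: (boolP (t2 \in S)) => t2S E.
  - exact: injg.
  - by move: (phiR _ t2I t2S); rewrite -E in_setD in_setC (gB _ t1S) andbF.
  - by move: (phiR _ t1I t1S); rewrite E in_setD in_setC (gB _ t2S) andbF.
  - by apply: injphi => //; rewrite !inE negb_or ?t1I ?t2I ?t1S ?t2S.
have f0I : forall t, t \in I' -> f0 t = h' t by move=> t tI; rewrite /f0 tI.
have f0S : forall t, t \in S -> f0 t = g t.
  by move=> t tS; rewrite /f0 tS (negbTE (SnI t tS)).
have f0nS : forall t, t \notin S -> f0 t \notin Bd.
  move=> t tS; rewrite /f0 (negbTE tS).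
  case: (boolP (t \in I')) => tI; first by apply: Igood; apply: h'I.
  by move: (phiR _ tI tS); rewrite in_setD in_setC => /andP[_].
have hcount : #|Bd| + #|I'| + 1 + W0 + s0 * D + s0 + s0 * D < #|VG|.
  rewrite cG /W0 /s0; move: cBd cI'k sD hn'; rewrite /s0; clear; lia.
have [f [injf fI nocf]] := fix_all symG irrG symT irrT hs0 hD gB hW h'pack SI' Sind hcount
  (leqnn _) injf0 f0I f0S f0nS.
exists f; split => //.
apply: (rat_deg (Qe := Qe) (Q := Q) (D := D) heps dle hQe) => //.
- by rewrite /Q leq_addl.
- exact: maxdeg_union.
- exact: hMG.
Qed.
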